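(* Let $\mathcal{N}$ be a quantum channel and let $\sigma$ be an optimal mixed state for $\mathcal{N}$. Let $\rho$ be a pure state and $\rho(\varepsilon)=\rho+\sum_{i\ge1}\varepsilon^iA^{(i)}$ a perturbative expansion of $\rho$, and let $f(\varepsilon)=I_c(\rho(\varepsilon),\mathcal{N})-I_c(\rho,\mathcal{N})$. Suppose $\varepsilon$ with $|\varepsilon|<r$ is such that $\sigma-r'\cdot\rho(\varepsilon)$ is positive semidefinite for some $r'>0$ and $f(\varepsilon)<0$. Then $P^{(1)}(\mathcal{N})>Q^{(1)}(\mathcal{N})$.
   Context: All Hilbert spaces are finite-dimensional; a quantum channel is a completely positive trace-preserving map. For a Stinespring isometry $V$ with $\mathcal{N}(\omega)=\mathrm{Tr}_E(V\omega V^\dagger)$, the complementary channel is $\mathcal{N}^c(\omega)=\mathrm{Tr}_B(V\omega V^\dagger)$. Coherent information: $I_c(\omega,\mathcal{N})=S(\mathcal{N}(\omega))-S(\mathcal{N}^c(\omega))$, $S$ the von Neumann entropy. One-shot quantum capacity: $Q^{(1)}(\mathcal{N})=\max_\omega I_c(\omega,\mathcal{N})$; $\sigma$ is optimal if $I_c(\sigma,\mathcal{N})=Q^{(1)}(\mathcal{N})$. For a finite ensemble $\{p_i,\rho_i\}$ (probabilities $p_i$, states $\rho_i$) with average $\bar\rho=\sum_ip_i\rho_i$, the private information is $I_p(\{p_i,\rho_i\},\mathcal{N})=I_c(\bar\rho,\mathcal{N})-\sum_ip_iI_c(\rho_i,\mathcal{N})$, and the one-shot private capacity is $P^{(1)}(\mathcal{N})=\max_{\{p_i,\rho_i\}}I_p(\{p_i,\rho_i\},\mathcal{N})$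 over all ensembles. A perturbative expansion of $\rho$ is a series $\rho(\varepsilon)=\rho+\sum_{i\ge1}\varepsilon^iA^{(i)}$ with each $A^{(i)}$ traceless Hermitian, such that for some $r>0$ the series converges and $\rho(\varepsilon)$ is a density operator for all $\varepsilon\in(-r,r)$. *)

(* Defs.v *)
From HB Require Import structures.
From mathcomp Require Import all_boot all_order all_algebra.
From mathcomp Require Import sesquilinear spectral.
From mathcomp Require Import complex.
From mathcomp Require Import all_classical all_reals all_analysis.

Set Implicit Arguments.
Unset Strict Implicit.
Unset Printing Implicit Defensive.

Import Order.TTheory GRing.Theory Num.Theory numFieldNormedType.Exports.
Local Open Scope ring_scope.

Section Quantum.
Variable R : realType.
Local Notation C := (R[i]).

Definition adj m n (A : 'M[C]_(m, n)) : 'M[C]_(n, m) := map_mx Num.conj (A ^T).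

(* positive semidefinite: hermitian and <v|A|v> >= 0 for all v
   (in the order of C, 0 <= z means z real and nonnegative) *)
Definition psd n (A : 'M[C]_n) : Prop :=
  adj A = A /\ forall v : 'cV[C]_n, 0 <= (adj v *m A *m v) 0 0.

Definition density n (rho : 'M[C]_n) : Prop := psd rho /\ \tr rho = 1.

Definition pure n (rho : 'M[C]_n) : Prop := density rho /\ rho *m rho = rho.

Definition negxlnx (x : R) : R := if x == 0 then 0 else - (x * ln x).

(* von Neumann entropy: sum over the eigenvalues (spectral decomposition of
   the normal matrix rho, from mathcomp's spectral theorem) *)
Definition vN_entropy n (rho : 'M[C]_n) : R :=
  \sum_(i < n) negxlnx (complex.Re (spectral_diag rho 0 i)).

(* tensor product H_B (x) H_E indexed by 'I_(dB * dE) via mxvec_index *)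
Definition ptraceE dB dE (X : 'M[C]_(dB * dE)) : 'M[C]_dB :=
  \matrix_(i, j) \sum_(e < dE) X (mxvec_index i e) (mxvec_index j e).
Definition ptraceB dB dE (X : 'M[C]_(dB * dE)) : 'M[C]_dE :=
  \matrix_(i, j) \sum_(b < dB) X (mxvec_index b i) (mxvec_index b j).

Definition stinespring_isometry dA dB dE (V : 'M[C]_(dB * dE, dA)) : Prop :=
  adj V *m V = 1%:M.

Definition chan dA dB dE (V : 'M[C]_(dB * dE, dA)) (w : 'M[C]_dA) : 'M[C]_dB :=
  ptraceE (V *m w *m adj V).
Definition chanc dA dB dE (V : 'M[C]_(dB * dE, dA)) (w : 'M[C]_dA) : 'M[C]_dE :=
  ptraceB (V *m w *m adj V).

Definition Ic dA dB dE (V : 'M[C]_(dB * dE, dA)) (w : 'M[C]_dA) : R :=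
  vN_entropy (chan V w) - vN_entropy (chanc V w).

Definition Q1 dA dB dE (V : 'M[C]_(dB * dE, dA)) : \bar R :=
  ereal_sup [set (Ic V w)%:E | w in [set w | density w]].

Definition optimal dA dB dE (V : 'M[C]_(dB * dE, dA)) (s : 'M[C]_dA) : Prop :=
  density s /\ (Ic V s)%:E = Q1 V.

Definition ensemble dA k (p : 'I_k -> R) (st : 'I_k -> 'M[C]_dA) : Prop :=
  (forall i, 0 <= p i) /\ \sum_(i < k) p i = 1 /\ (forall i, density (st i)).

Definition avg dA k (p : 'I_k -> R) (st : 'I_k -> 'M[C]_dA) : 'M[C]_dA :=
  \sum_(i < k) ((p i)%:C)%C *: st i.

Definition Ip dA dB dE (V : 'M[C]_(dB * dE, dA)) k (p : 'I_k -> R)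
  (st : 'I_k -> 'M[C]_dA) : R :=
  Ic V (avg p st) - \sum_(i < k) p i * Ic V (st i).

Definition P1 dA dB dE (V : 'M[C]_(dB * dE, dA)) : \bar R :=
  ereal_sup [set x | exists k (p : 'I_k -> R) (st : 'I_k -> 'M[C]_dA),
                       ensemble p st /\ x = (Ip V p st)%:E].

Definition pseries (eps : R) (a : nat -> R) : nat -> R :=
  series (fun i => eps ^+ i.+1 * a i.+1).

Definition rho_eps n (rho : 'M[C]_n) (A : nat -> 'M[C]_n) (eps : R) : 'M[C]_n :=
  rho + \matrix_(j, k)
    ((limn (pseries eps (fun i => complex.Re (A i j k))))
      +i* (limn (pseries eps (fun i => complex.Im (A i j k)))))%C.

Definition pert_expansion n (rho : 'M[C]_n) (A : nat -> 'M[C]_n) (r : R) : Prop :=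
  0 < r /\
  (forall i, (0 < i)%N -> \tr (A i) = 0 /\ adj (A i) = A i) /\
  (forall eps : R, - r < eps < r ->
     (forall j k, cvgn (pseries eps (fun i => complex.Re (A i j k))) /\
                  cvgn (pseries eps (fun i => complex.Im (A i j k)))) /\
     density (rho_eps rho A eps)).

End Quantum.

(* Main.v *)
Require Import Defs.
From HB Require Import structures.
From mathcomp Require Import all_boot all_order all_algebra.
From mathcomp Require Import sesquilinear spectral.
From mathcomp Require Import complex.
From mathcomp Require Import all_classical all_reals all_analysis.
Set Implicit Arguments. Unset Strict Implicit. Unset Printing Implicit Defensive.
Import Order.TTheory GRing.Theory Num.Theory.
Local Open Scope ring_scope.

Section Syl.
Variable F : comNzRingType.

Lemma sylvester m n (A : 'M[F]_(m, n)) (B : 'M[F]_(n, m)) :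
  'X^n * char_poly (A *m B) = 'X^m * char_poly (B *m A).
Proof.
pose A' := map_mx polyC A; pose B' := map_mx polyC B.
pose Mb := block_mx (scalar_mx 'X : 'M[{poly F}]_m) A' ('X *: B') (scalar_mx 'X : 'M[{poly F}]_n).
have e1 : Mb = block_mx 1%:M 0 B' 1%:M *m block_mx 'X%:M A' 0 ('X%:M - B' *m A').
  rewrite mulmx_block !mul1mx !mul0mx ?mulmx0 !addr0 ?add0r mul_mx_scalar.
  by rewrite addrC subrK.
have e2 : Mb = block_mx ('X%:M - A' *m B') A' 0 'X%:M *m block_mx 1%:M 0 B' 1%:M.
  rewrite mulmx_block !mulmx1 ?mulmx0 ?mul0mx ?addr0 ?add0r subrK.
  by rewrite mul_scalar_mx.
have d1 := congr1 determinant e1; have d2 := congr1 determinant e2.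
rewrite det_mulmx det_lblock !det1 mul1r det_ublock det_scalar in d1.
rewrite det_mulmx det_lblock !det1 mulr1 det_ublock det_scalar in d2.
rewrite /char_poly /char_poly_mx !map_mxM -/A' -/B'.
by rewrite mul1r mulr1 in d1 d2; rewrite mulrC -d1 d2.
Qed.

Lemma char_poly_tr n (A : 'M[F]_n) : char_poly A^T = char_poly A.
Proof.
rewrite /char_poly -det_tr; congr determinant.
apply/matrixP => i j; rewrite !mxE eq_sym //.
Qed.
End Syl.

Section Sim.
Variable F : fieldType.
Lemma char_poly_sim n (P D : 'M[F]_n) : P \in unitmx ->
  char_poly (invmx P *m D *m P) = char_poly D.
Proof.
move=> Pu; rewrite /char_poly /char_poly_mx.
have -> : (scalar_mx 'X : 'M[{poly F}]_n) - map_mx polyC (invmx P *m D *m P) =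
   map_mx polyC (invmx P) *m ('X%:M - map_mx polyC D) *m map_mx polyC P.
  rewrite mulmxBr mulmxBl !map_mxM; congr (_ - _).
  by rewrite mul_mx_scalar -scalemxAl -map_mxM mulVmx // map_mx1 scalemx1.
rewrite !det_mulmx mulrC mulrA -det_mulmx -map_mxM mulmxV // map_mx1 det1 mul1r //.
Qed.

Lemma char_poly_diag n (d : 'rV[F]_n) :
  char_poly (diag_mx d) = \prod_(i < n) ('X - (d 0 i)%:P).
Proof.
rewrite char_poly_trig ?diag_mx_is_trig //.
by apply: eq_bigr => i _; rewrite mxE eqxx mulr1n.
Qed.
End Sim.



Section Q.
Variable R : realType.
Local Notation C := (R[i]).

Definition sdseq n (H : 'M[C]_n) := [seq spectral_diag H 0 i | i <- enum 'I_n].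

Lemma char_poly_normal n (H : 'M[C]_n) : H \is normalmx ->
  char_poly H = \prod_(x <- sdseq H) ('X - x%:P).
Proof.
move=> /orthomx_spectralP HE.
rewrite {1}HE char_poly_sim ?spectral_unit // char_poly_diag.
by rewrite /sdseq big_map big_enum.
Qed.

Lemma vN_seq n (H : 'M[C]_n) :
  vN_entropy H = \sum_(x <- sdseq H) negxlnx (complex.Re x).
Proof. by rewrite /vN_entropy /sdseq big_map big_enum. Qed.

Lemma Xn_prod k : ('X^k : {poly C}) = \prod_(x <- nseq k (0:C)) ('X - x%:P).
Proof.
elim: k => [|k IH]; first by rewrite expr0 big_nil.
by rewrite exprS IH /= big_cons subr0.
Qed.

Lemma vN_eq n1 n2 (H1 : 'M[C]_n1) (H2 : 'M[C]_n2) :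
  H1 \is normalmx -> H2 \is normalmx ->
  'X^n2 * char_poly H1 = 'X^n1 * char_poly H2 -> vN_entropy H1 = vN_entropy H2.
Proof.
move=> N1 N2; rewrite !char_poly_normal // !Xn_prod -!big_cat => /prod_XsubC_eq pe.
have E : \sum_(x <- nseq n2 0 ++ sdseq H1) negxlnx (complex.Re x) =
  \sum_(x <- nseq n1 0 ++ sdseq H2) negxlnx (complex.Re x) by apply: perm_big.
move: E; rewrite !big_cat /= -!vN_seq.
have z k : \sum_(x <- nseq k (0:C)) negxlnx (complex.Re x) = 0.
  rewrite big1_seq // => x /andP[_]; rewrite mem_nseq => /andP[_ /eqP->].
  by rewrite /negxlnx /= eqxx.
by rewrite !z !add0r.
Qed.


Lemma adjM m n p (A : 'M[C]_(m, n)) (B : 'M[C]_(n, p)) :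
  adj (A *m B) = adj B *m adj A.
Proof. by rewrite /adj trmx_mul map_mxM. Qed.

Lemma adjK m n (A : 'M[C]_(m, n)) : adj (adj A) = A.
Proof.
rewrite /adj map_trmx trmxK -map_mx_comp; apply: map_mx_id => x /=.
exact: conjCK.
Qed.

Lemma adj_tr m n (A : 'M[C]_(m, n)) : adj (A^T) = (adj A)^T.
Proof. by rewrite /adj map_trmx. Qed.

Lemma adjB m n (A B : 'M[C]_(m, n)) : adj (A - B) = adj A - adj B.
Proof. by rewrite /adj linearB map_mxB. Qed.

Lemma adjD m n (A B : 'M[C]_(m, n)) : adj (A + B) = adj A + adj B.
Proof. by rewrite /adj linearD map_mxD. Qed.

Lemma adjZ m n a (A : 'M[C]_(m, n)) : adj (a *: A) = (Num.conj a) *: adj A.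
Proof. by rewrite /adj linearZ map_mxZ. Qed.

Lemma adjE m n (A : 'M[C]_(m, n)) i j : adj A i j = Num.conj (A j i).
Proof. by rewrite !mxE. Qed.

Lemma herm_normal n (H : 'M[C]_n) : adj H = H -> H \is normalmx.
Proof. by move=> HH; apply/normalmxP; rewrite -[(H ^t* )%sesqui]/(adj H) HH. Qed.

Lemma pure_vN dB dE (v : 'cV[C]_(dB * dE)) :
  vN_entropy (ptraceE (v *m adj v)) = vN_entropy (ptraceB (v *m adj v)).
Proof.
pose M := \matrix_(b < dB, e < dE) v (mxvec_index b e) 0.
have E1 : ptraceE (v *m adj v) = M *m adj M.
  apply/matrixP => i j; rewrite !mxE; apply: eq_bigr => e _.
  by rewrite !mxE big_ord1 !mxE.
have E2 : ptraceB (v *m adj v) = (adj M *m M)^T.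
  apply/matrixP => i j; rewrite !mxE; apply: eq_bigr => b _.
  by rewrite !mxE big_ord1 !mxE mulrC.
rewrite E1 E2; apply: vN_eq.
- by apply: herm_normal; rewrite adjM adjK.
- by apply: herm_normal; rewrite adj_tr adjM adjK.
- by rewrite char_poly_tr sylvester.
Qed.

Lemma Ic_pure dA dB dE (V : 'M[C]_(dB * dE, dA)) (u : 'cV[C]_dA) :
  Ic V (u *m adj u) = 0.
Proof.
rewrite /Ic /chan /chanc.
have -> : V *m (u *m adj u) *m adj V = (V *m u) *m adj (V *m u).
  by rewrite adjM !mulmxA.
by rewrite pure_vN subrr.
Qed.


Definition orthon n (u : 'I_n -> 'cV[C]_n) :=
  forall i j, adj (u i) *m u j = ((i == j)%:R)%:M.

Lemma herm_dec n (T : 'M[C]_n) : adj T = T ->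
  exists (d : 'I_n -> C) (u : 'I_n -> 'cV[C]_n),
    T = \sum_i d i *: (u i *m adj (u i)) /\ orthon u.
Proof.
move=> HT; have /orthomx_spectralP TE := herm_normal HT.
set P := spectralmx T in TE; set D := spectral_diag T in TE.
have PU : P \is unitarymx by exact: spectral_unitarymx.
have PP : P *m adj P = 1%:M by apply/unitarymxP.
rewrite invmx_unitary // in TE.
exists (fun i => D 0 i), (fun i => adj (row i P)); split.
  rewrite {1}TE; apply/matrixP => a b; rewrite summxE mul_mx_diag !mxE.
  apply: eq_bigr => i _; rewrite !mxE big_ord1 !mxE.
  by rewrite conjCK mulrA [_ * D 0 i]mulrC.
move=> i j; rewrite adjK; apply/matrixP => a b.
rewrite !ord1 !mxE.
have := congr1 (fun (M : 'M[C]_n) => M i j) PP; rewrite !mxE => <-.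
by apply: eq_bigr => k _; rewrite !mxE.
Qed.

Lemma dec_apply n (T : 'M[C]_n) d u : T = \sum_i d i *: (u i *m adj (u i)) ->
  orthon u -> forall k, T *m u k = d k *: u k.
Proof.
move=> -> O k; rewrite mulmx_suml (bigD1 k) //= big1 ?addr0.
  by rewrite -scalemxAl -mulmxA O eqxx mulmx1.
move=> i ik; rewrite -scalemxAl -mulmxA O (negbTE ik) mul_mx_scalar scale0r scaler0 //.
Qed.

Lemma dec_coef n (T : 'M[C]_n) d u : T = \sum_i d i *: (u i *m adj (u i)) ->
  orthon u -> forall k, adj (u k) *m T *m u k = (d k)%:M.
Proof.
move=> TE O k; rewrite -mulmxA (dec_apply TE O) -scalemxAr O eqxx.
by rewrite scale_scalar_mx mulr1.
Qed.

Lemma dec_trace n (T : 'M[C]_n) d u : T = \sum_i d i *: (u i *m adj (u i)) ->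
  orthon u -> \tr T = \sum_i d i.
Proof.
move=> -> O; rewrite raddf_sum; apply: eq_bigr => i _.
by rewrite /= mxtraceZ mxtrace_mulC O eqxx mxtrace1 mulr1.
Qed.

Lemma psd_dec n (T : 'M[C]_n) : psd T ->
  exists (d : 'I_n -> C) (u : 'I_n -> 'cV[C]_n),
    [/\ T = \sum_i d i *: (u i *m adj (u i)), orthon u & forall i, 0 <= d i].
Proof.
case=> HT Hp; have [d [u [TE O]]] := herm_dec HT.
exists d, u; split => // i.
by have := Hp (u i); rewrite (dec_coef TE O) mxE eqxx mulr1n.
Qed.

Lemma entry11 (c : 'M[C]_1) : (c *m adj c) 0 0 = c 0 0 * (c 0 0)^*.
Proof.
rewrite mxE big_ord1 !mxE.
have E : forall i : 'I_1, i = 0 by move=> [[]//?]; apply: val_inj.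
by rewrite -(E ord0).
Qed.

Lemma rank1_density n (u : 'cV[C]_n) : adj u *m u = 1%:M ->
  density (u *m adj u).
Proof.
move=> U; split; last by rewrite mxtrace_mulC U mxtrace1.
split; first by rewrite adjM adjK.
move=> w; have -> : adj w *m (u *m adj u) *m w = (adj w *m u) *m adj (adj w *m u) by rewrite adjM adjK !mulmxA.
rewrite entry11.
exact: mul_conjC_ge0.
Qed.


Lemma pure_rank1 n (rho : 'M[C]_n) : pure rho -> exists u : 'cV[C]_n, rho = u *m adj u.
Proof.
case=> [[Hpsd Htr] Hid]; have [d [u [TE O Hd]]] := psd_dec Hpsd.
have Hsq k : d k * d k = d k.
  have := dec_coef TE O k; rewrite -{1}Hid.
  rewrite -mulmxA -(mulmxA rho) (dec_apply TE O) -!scalemxAr mulmxA.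
  rewrite (dec_coef TE O) scale_scalar_mx => /matrixP /(_ 0 0).
  by rewrite !mxE eqxx !mulr1n.
have Hs : \sum_i d i = 1 by rewrite -(dec_trace TE O).
case: (pickP (fun j => d j != 0)) => [j dj | H]; last first.
  exfalso; move: Hs; rewrite big1 => [/eqP|i _]; first by rewrite eq_sym oner_eq0.
  by have := H i => /= /negbFE /eqP.
have dj1 : d j = 1 by apply: (mulfI dj); rewrite Hsq mulr1.
move: Hs; rewrite (bigD1 j) //= dj1 => Hs.
have Hz : \sum_(i < n | i != j) d i = 0 by apply: (@addrI _ 1); rewrite addr0.
have Hz' := psumr_eq0P (fun i _ => Hd i) Hz.
exists (u j); rewrite TE (bigD1 j) //= big1 ?addr0 ?dj1 ?scale1r // => i ij.
by rewrite Hz' // scale0r.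
Qed.

Lemma Ic_pure_state dA dB dE (V : 'M[C]_(dB * dE, dA)) rho : pure rho -> Ic V rho = 0.
Proof. by move=> /pure_rank1 [u ->]; exact: Ic_pure. Qed.


Lemma ge0_realC (z : C) : 0 <= z -> ((complex.Re z)%:C)%C = z /\ 0 <= complex.Re z.
Proof.
case: z => a b; rewrite lecE /= => /andP [/eqP -> ->]; split => //.
Qed.

End Q.

Unset Implicit Arguments.

Theorem proposition2 (R : realType) (dA dB dE : nat)
  (V : 'M[R[i]]_(dB * dE, dA)) (sigma rho : 'M[R[i]]_dA)
  (A : nat -> 'M[R[i]]_dA) (r eps r' : R) :
  stinespring_isometry V ->
  optimal V sigma ->
  pure rho ->
  pert_expansion rho A r ->
  `|eps| < r ->
  0 < r' ->
  psd (sigma - (r'%:C)%C *: rho_eps rho A eps) ->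
  Ic V (rho_eps rho A eps) - Ic V rho < 0 ->
  (Q1 V < P1 V)%E.
Proof.
move=> _ [[_ trS] HQ] Hrho [_ [_ Hexp]] Heps r'0 Hpsd.
have Hin : - r < eps < r by rewrite -ltr_norml.
have [_ Hden] := Hexp eps Hin.
have [_ trE] := Hden.
rewrite (Ic_pure_state V Hrho) subr0 => Hf.
set re := rho_eps rho A eps in Hpsd Hf trE *.
have [d [u [TE O Hd]]] := psd_dec Hpsd.
have Hdr j := ge0_realC (Hd j).
have trT : \sum_j d j = 1 - (r'%:C)%C.
  by rewrite -(dec_trace TE O) raddfB /= mxtraceZ trS trE mulr1.
pose p (i : 'I_dA.+1) := if unlift ord0 i is Some j then complex.Re (d j) else r'.
pose st (i : 'I_dA.+1) := if unlift ord0 i is Some j then u j *m adj (u j) else re.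
have Hens : ensemble p st.
  split; [|split].
  - move=> i; rewrite /p; case: unlift => [j|]; [exact: (Hdr j).2 | exact: ltW].
  - rewrite big_ord_recl /p unlift_none.
    under eq_bigr => j _ do rewrite liftK.
    apply: (@complexI R); rewrite rmorphD rmorph_sum /=.
    under eq_bigr => j _ do rewrite (Hdr j).1.
    by rewrite trT addrC subrK.
  - move=> i; rewrite /st; case: unlift => [j|]; last first.
      exact: Hden.
    apply: rank1_density; by rewrite O eqxx.
have Havg : avg p st = sigma.
  rewrite /avg big_ord_recl /p /st unlift_none.
  under eq_bigr => j _ do rewrite liftK (Hdr j).1.
  by rewrite -TE addrC subrK.
have HIp : Ip V p st = Ic V sigma - r' * Ic V re.
  rewrite /Ip Havg big_ord_recl /p /st unlift_none big1 ?addr0 // => j _.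
  by rewrite liftK Ic_pure mulr0.
rewrite -HQ; apply: (@lt_le_trans _ _ (Ip V p st)%:E).
  by rewrite lte_fin HIp -[X in X < _]subr0 ler_ltB // pmulr_rlt0.
apply: ereal_sup_ubound; by exists dA.+1, p, st.
Qed.
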